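(* The function $y\mapsto h(e^{y})$ is concave on the interval $(-\infty,\ln(1/2)]$.
   Context: $h(t)=(1-t)\left[\psi-\left(\frac{t}{1-t}\right)^{\chi}\right]$ for $t\in[0,1/2]$, with $\psi=13/10$ and $\chi=1/2$. *)

(* Defs.v *)
From Stdlib Require Import Reals.
Open Scope R_scope.

Definition psi : R := 13 / 10.
Definition chi : R := 1 / 2.

Definition h (t : R) : R := (1 - t) * (psi - Rpower (t / (1 - t)) chi).

Definition concave_on (I : R -> Prop) (f : R -> R) : Prop :=
  forall x y a, I x -> I y -> 0 <= a <= 1 ->
    a * f x + (1 - a) * f y <= f (a * x + (1 - a) * y).

(* Main.v *)
Require Import Defs.
From Stdlib Require Import Reals Lra Psatz.
From Coquelicot Require Import Coquelicot.
Open Scope R_scope.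
Definition W y := exp (chi * ln (exp y / (1 - exp y))).
Definition D y := - exp y * psi + exp y * W y - W y / 2.
Definition k w := (2*psi*w^2 + w - w^3) / (2*(1+w^2)).

Lemma W2 y : y < 0 -> W y * W y = exp y / (1 - exp y).
Proof.
intros Hy.
assert (Ht : exp y < 1) by (rewrite <- exp_0; apply exp_increasing; lra).
assert (Hp := exp_pos y).
unfold W. rewrite <- exp_plus. replace (chi * ln (exp y / (1 - exp y)) + chi * ln (exp y / (1 - exp y))) with (ln (exp y / (1 - exp y))) by (unfold chi; field).
apply exp_ln. apply Rdiv_lt_0_compat; lra.
Qed.

Lemma Dk y : y < 0 -> D y = - k (W y).
Proof.
intros Hy. pose proof (W2 y Hy) as H.
assert (Ht : exp y < 1) by (rewrite <- exp_0; apply exp_increasing; lra).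
assert (Hp := exp_pos y).
assert (Et : exp y = W y ^2 / (1 + W y ^2)).
{ assert (1 + W y ^ 2 > 0) by nra. apply (Rmult_eq_reg_r (1 + W y ^2)); [|lra].
  field_simplify; [|lra]. replace (W y ^2) with (W y * W y) by ring. rewrite H. field. lra. }
unfold D, k. rewrite Et. field. nra.
Qed.

Lemma k_mono a b : 0 <= a -> a <= b -> b <= 1 -> k a <= k b.
Proof.
intros. 
assert (0 < 1 + a^2) by nra. assert (0 < 1 + b^2) by nra.
assert (E : k b - k a = (b-a)*(2*psi*(a+b) + 1 - a*b - (a*a+a*b+b*b) - a*a*b*b) / (2*(1+a^2)*(1+b^2))).
{ unfold k. field. lra. }
assert (0 <= (b-a)*(2*psi*(a+b) + 1 - a*b - (a*a+a*b+b*b) - a*a*b*b) / (2*(1+a^2)*(1+b^2))).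
{ apply Rmult_le_pos. apply Rmult_le_pos. lra. unfold psi.
  assert (a*b <= b) by nra. assert (a*a <= a) by nra. assert (b*b <= b) by nra. assert (a*a*b*b <= 1) by nra. nra.
  left. apply Rinv_0_lt_compat. nra. }
lra.
Qed.

Lemma ln_half_neg : ln (1/2) < 0.
Proof. rewrite <- ln_1. apply ln_increasing; lra. Qed.

Lemma t_half y : y <= ln (1/2) -> exp y <= 1/2.
Proof. intros. rewrite <- (exp_ln (1/2)) by lra. destruct H; [left; apply exp_increasing; auto| rewrite H; lra]. Qed.

Lemma W_mono y1 y2 : y1 <= y2 -> y2 <= ln (1/2) -> W y1 <= W y2.
Proof.
intros H1 H2. pose proof (t_half _ H2).
assert (exp y1 <= exp y2) by (destruct H1; [left; apply exp_increasing; auto|subst; lra]).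
pose proof (exp_pos y1).
unfold W. destruct (Req_dec y1 y2) as [->|Hn]. lra.
left. apply exp_increasing. apply Rmult_lt_compat_l. unfold chi; lra.
apply ln_increasing. apply Rdiv_lt_0_compat; lra.
assert (exp y1 < exp y2) by (apply exp_increasing; lra).
unfold Rdiv. apply (Rmult_lt_reg_r ((1 - exp y1)*(1-exp y2))). nra.
field_simplify; try lra.
Qed.

Lemma W_le1 y : y <= ln (1/2) -> W y <= 1.
Proof.
intros H. pose proof (t_half _ H). pose proof (exp_pos y).
unfold W. rewrite <- exp_0 at 2.
assert (ln (exp y / (1 - exp y)) <= 0).
{ rewrite <- ln_1. assert (exp y / (1 - exp y) <= 1).
  { apply (Rmult_le_reg_r (1 - exp y)). lra. field_simplify; lra. }
  destruct H2 as [H2|H2]. left. apply ln_increasing. apply Rdiv_lt_0_compat; lra. auto. rewrite H2; lra. }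
destruct (Req_dec (chi * ln (exp y / (1 - exp y))) 0) as [E|E]. rewrite E; lra.
left. apply exp_increasing. unfold chi in *. lra.
Qed.

Lemma D_anti y1 y2 : y1 <= y2 -> y2 <= ln (1/2) -> D y2 <= D y1.
Proof.
intros. pose proof ln_half_neg.
rewrite !Dk by lra.
assert (k (W y1) <= k (W y2)). apply k_mono. left; apply exp_pos. apply W_mono; auto. apply W_le1; auto.
lra.
Qed.

Lemma derg y : y < 0 -> is_derive (fun y => h (exp y)) y (D y).
Proof.
intros Hy.
assert (Ht : exp y < 1) by (rewrite <- exp_0; apply exp_increasing; lra).
assert (Hp := exp_pos y).
unfold h, Rpower, D, W.
auto_derive.
- repeat split; try lra. apply Rdiv_lt_0_compat; lra.
- unfold Rdiv, Rminus; set (E := exp (chi * _)). unfold chi. field. lra.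
Qed.

Lemma derR y : y < 0 -> derivable_pt_lim (fun y => h (exp y)) y (D y).
Proof. intros. apply is_derive_Reals. apply derg; auto. Qed.

Lemma conc_lt x y a : x < y -> y <= ln (1/2) -> 0 < a < 1 ->
  a * h (exp x) + (1 - a) * h (exp y) <= h (exp (a * x + (1 - a) * y)).
Proof.
intros Hxy Hy Ha. pose proof ln_half_neg.
set (z := a * x + (1 - a) * y).
assert (x < z) by (unfold z; nra). assert (z < y) by (unfold z; nra).
destruct (MVT_cor2 (fun y => h (exp y)) D x z) as [c1 [E1 [C1 C1']]]; auto.
{ intros. apply derR. lra. }
destruct (MVT_cor2 (fun y => h (exp y)) D z y) as [c2 [E2 [C2 C2']]]; auto.
{ intros. apply derR. lra. }
assert (D c2 <= D c1) by (apply D_anti; lra).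
simpl in E1, E2.
assert (z - x = (1-a)*(y-x)) by (unfold z; ring).
assert (y - z = a*(y-x)) by (unfold z; ring).
rewrite H3 in E1. rewrite H4 in E2.
assert (0 <= a*(1-a)*(y-x)) by (apply Rmult_le_pos; nra).
nra.
Qed.

Theorem lemma45 :
  concave_on (fun y => y <= ln (1 / 2)) (fun y => h (exp y)).
Proof.
intros x y a Hx Hy Ha.
destruct (Req_dec a 0) as [->|Ha0].
{ replace (0 * x + (1 - 0) * y) with y by ring. lra. }
destruct (Req_dec a 1) as [->|Ha1].
{ replace (1 * x + (1 - 1) * y) with x by ring. lra. }
destruct (Rtotal_order x y) as [L|[E|G]].
- apply conc_lt; auto; lra.
- subst. replace (a * y + (1 - a) * y) with y by ring. lra.
- pose proof (conc_lt y x (1 - a) G Hx ltac:(lra)).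
  replace (a * x + (1 - a) * y) with ((1 - a) * y + (1 - (1 - a)) * x) by ring. lra.
Qed.
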